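(* Let $k\ge 2$ and $n\ge 3$ be integers. Let $K$ be the graph with vertex set $\{a,b,v_1,\dots,v_{n-1}\}$ in which $v_1,\dots,v_{n-1}$ are pairwise adjacent, $a$ is adjacent exactly to $v_1,\dots,v_{n-2}$, and $b$ is adjacent exactly to $v_{n-1}$. Then for all integers $0\le x,y\le kn-2$, the graph $K$ has a $(kn-1,k)$-coloring $c$ with $c(a)=x$ and $c(b)=y$ if and only if $x\neq y$.
   Context: For positive integers $p,q$, a $(p,q)$-coloring of a graph $G$ is a map $c:V(G)\to\{0,1,\dots,p-1\}$ such that for every edge $xy\in E(G)$ one has $q\le |c(x)-c(y)|\le p-q$. *)

(* Defs.v *)
From mathcomp Require Import all_boot.
Set Implicit Arguments. Unset Strict Implicit. Unset Printing Implicit Defensive.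

Definition natdist (m n : nat) : nat := (m - n) + (n - m).

Definition pq_coloring (V : Type) (p q : nat) (adj : V -> V -> bool)
  (c : V -> nat) : Prop :=
  (forall v, c v < p) /\
  (forall u v, adj u v -> q <= natdist (c u) (c v) <= p - q).

(* Vertices of K: a, b and v_1, ..., v_m  (Vv i stands for v_(i+1), i : 'I_m). *)
Inductive Kvert (m : nat) : Type :=
| Ka : Kvert m
| Kb : Kvert m
| Kv : 'I_m -> Kvert m.
Arguments Ka {m}. Arguments Kb {m}.

Definition K_adj (n : nat) (u w : Kvert n.-1) : bool :=
  match u, w with
  | Kv i, Kv j => i != j
  | Ka, Kv i | Kv i, Ka => (i : nat) < n - 2
  | Kb, Kv i | Kv i, Kb => (i : nat) == n - 2
  | _, _ => false
  end.

(* Main.v *)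
Require Import Defs.
From mathcomp Require Import all_boot zify.
Set Implicit Arguments.

Lemma modcase p a : 0 < p -> a < 2*p -> a %% p = if a < p then a else a - p.
Proof.
move=> hp ha; case: ifP => h; first by rewrite modn_small.
have e: a = (a-p)+p by lia. rewrite {1}e modnDr modn_small; lia.
Qed.

Definition good p k u v := k <= natdist u v /\ natdist u v <= p - k.

Lemma good_sym p k u v : good p k u v -> good p k v u.
Proof. rewrite /good /natdist; lia. Qed.

Lemma good_rot p k u v t : u < p -> v < p -> t < p -> good p k u v ->
  good p k ((u+t)%%p) ((v+t)%%p).
Proof.
move=> hu hv ht; have hp : 0 < p by lia.
rewrite !modcase //; try lia. rewrite /good /natdist.
case: ifP => h1; case: ifP => h2; lia.
Qed.

Lemma good_inj p k u v j j' : u < p -> v < p -> j < k -> j' < k -> good p k u v ->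
  (u+j)%%p <> (v+j')%%p.
Proof.
move=> hu hv hj hj'; rewrite /good /natdist => hg.
have hp : 0 < p by lia.
rewrite !modcase //; try lia.
case: ifP => h1; case: ifP => h2; lia.
Qed.

Lemma same_inj p k u j j' : u < p -> j < k -> j' < k -> k <= p ->
  (u+j)%%p = (u+j')%%p -> j = j'.
Proof.
move=> hu hj hj' hk. have hp : 0 < p by lia.
rewrite !modcase //; try lia.
case: ifP => h1; case: ifP => h2; lia.
Qed.

Unset Implicit Arguments.

Lemma fwd k m (hk : 2 <= k) (c : Kvert (m.+3).-1 -> nat) :
  pq_coloring (k * m.+3 - 1) k (@K_adj m.+3) c -> c Ka <> c Kb.
Proof.
set p := k * m.+3 - 1. case=> hlt hadj hab.
have hp : 0 < p by rewrite /p; nia.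
have gadj u w : K_adj u w -> good p k (c u) (c w).
  by move=> /hadj /andP [h1 h2]; split.
pose g (i : 'I_m.+3) : nat := if (i : nat) < m.+2 then c (Kv (inord i)) else c Ka.
have glt i : g i < p by rewrite /g; case: ifP.
pose F (ij : 'I_m.+3 * 'I_k) : 'I_p := Ordinal (ltn_pmod (g ij.1 + ij.2) hp).
have Finj : injective F.
  move=> [i j] [i' j'] /(congr1 val) /= e.
  have [ei|nei] := eqVneq i i'.
    subst i'; congr pair; apply: val_inj.
    have hkp : k <= p by rewrite /p; nia.
    have := @same_inj p k (g i) j j' (glt i) (ltn_ord j) (ltn_ord j') hkp e. by [].
  exfalso; apply: (@good_inj p k (g i) (g i') j j' (glt i) (glt i') (ltn_ord j) (ltn_ord j') _ e).
  have hv : forall a b : 'I_m.+3, a != b -> (a : nat) < m.+2 -> good p k (g a) (g b).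
    move=> a b nab ha; rewrite /g ha.
    case: ifP => hb.
      apply: gadj => /=. apply/negP => /eqP /(congr1 val) /=.
      rewrite !inordK //. move=> eab; move/eqP: nab; apply; exact: val_inj.
    apply: good_sym.
    have hb' : (b : nat) = m.+2 by have := ltn_ord b; lia.
    have [ha'|ha'] := ltnP a m.+1.
      apply: gadj => /=. rewrite inordK //. 
    rewrite hab; apply: gadj => /=. rewrite inordK //. apply/eqP. lia.
  case: (ltnP i m.+2) => hi; first exact: hv.
  apply: good_sym; apply: hv; first by rewrite eq_sym.
  have := ltn_ord i'; have := ltn_ord i. move/eqP: nei => nei.
  have : (i : nat) <> i' by move=> e'; apply: nei; apply: val_inj.
  lia.
have := leq_card F Finj. rewrite card_prod !card_ord /p. nia.
Qed.

Definition off k m y (v : Kvert m.+2) : nat :=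
  match v with
  | Ka => 0
  | Kb => y
  | Kv i => if (i : nat) < m.+1 then
              (if y < k * m.+2 then k * (i.+1) else k * (i.+2) - 1)
            else (if y < k then k * m.+2 + y - 1
                  else if y < k * m.+2 then 0 else y - k * m.+2 + 1)
  end.

Lemma off_lt k m y v : 2 <= k -> y < k * m.+3 - 1 -> off k m y v < k * m.+3 - 1.
Proof.
move=> hk hy; case: v => //=; first nia.
move=> i; have := ltn_ord i.
case: ifP => h1; case: ifP => h2; try case: ifP => h3; nia.
Qed.

Lemma off_good k m y (u w : Kvert m.+2) : 2 <= k -> 0 < y -> y < k * m.+3 - 1 ->
  @K_adj m.+3 u w -> good (k * m.+3 - 1) k (off k m y u) (off k m y w).
Proof.
move=> hk hy0 hy; rewrite /good /natdist.
case: u => [||i]; case: w => [||j] //=; try have := ltn_ord i; try have := ltn_ord j;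
  try (repeat case: ifP; nia).
move=> _ _ /eqP nij; have hi : (i:nat) < m.+2 := ltn_ord i; have hj : (j:nat) < m.+2 := ltn_ord j; have nij' : (i:nat) <> j by move=> e; apply: nij; apply: val_inj.
move: hy; rewrite !mulnS => hy.
have hi3 : (i < m.+1)%N -> k * i <= k * m by move=> h; rewrite leq_mul2l; apply/orP; right; lia.
have hj3 : (j < m.+1)%N -> k * j <= k * m by move=> h; rewrite leq_mul2l; apply/orP; right; lia.
have [lij|lji] : (i < j)%N \/ (j < i)%N by lia.
- have h1 : k * i + k <= k * j by rewrite addnC -mulnS leq_mul2l lij orbT.
  have h2 : k * j <= k * m.+1.
  rewrite leq_mul2l; apply/orP; right. lia.
  rewrite mulnS in h2.
  repeat case: ifP; lia.
- have h1 : k * j + k <= k * i by rewrite addnC -mulnS leq_mul2l lji orbT.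
  have h2 : k * i <= k * m.+1 by rewrite leq_mul2l; apply/orP; right; lia.
  rewrite mulnS in h2.
  repeat case: ifP; lia.
Qed.

Theorem lemma3 (k n : nat) (hk : 2 <= k) (hn : 3 <= n) (x y : nat)
  (hx : x <= k * n - 2) (hy : y <= k * n - 2) :
  (exists c : Kvert n.-1 -> nat,
      pq_coloring (k * n - 1) k (@K_adj n) c /\ c Ka = x /\ c Kb = y)
  <-> x <> y.
Proof.
case: n hn hx hy => [|[|[|m]]] // _ hx hy.
split.
  by case=> c [hc [<- <-]]; exact: (@fwd k m hk c hc).
move=> nxy.
set p := k * m.+3 - 1.
have hp : 0 < p by rewrite /p; nia.
have hxp : x < p by rewrite /p; lia.
have hyp : y < p by rewrite /p; lia.
pose y' := (y + p - x) %% p.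
have hy' : y' < p by exact: ltn_pmod.
have ey' : y' = if x <= y then y - x else y + p - x.
  rewrite /y' (modcase _ _ hp); last lia.
  case: ifP => h; case: ifP => h'; lia.
have ey : (y' + x) %% p = y.
  rewrite ey'; case: ifP => h; rewrite (modcase _ _ hp); try lia; case: ifP; lia.
have hy0 : 0 < y' by rewrite ey'; case: ifP; lia.
exists (fun v => (off k m y' v + x) %% p); split; last first.
  split => /=; [exact: modn_small | exact: ey].
split => [v|u w huw]; first exact: ltn_pmod.
have := @good_rot p k _ _ x (@off_lt k m y' u hk hy') (@off_lt k m y' w hk hy') hxp (@off_good k m y' u w hk hy0 hy' huw).
by case=> h1 h2; apply/andP.
Qed.
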